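(* Let $n\in\mathbb N$, $W=\{w_1,\dots,w_n\}$, $M=\{m_1,\dots,m_n\}$ disjoint, and let $\mu_{\mathrm{id}}$ be the perfect marriage marrying $w_i$ to $m_i$ for every $i$. Let $D=\{(i,j)\in\{1,\dots,n\}^2: i\ne j\}$. There exist functions $\succ_W:\{0,1\}^{D}\to\mathcal F(W,M)$ and $\succ_M:\{0,1\}^{D}\to\mathcal F(M,W)$ such that for all $\bar x=(x^i_j)_{(i,j)\in D}$ and $\bar y=(y^i_j)_{(i,j)\in D}$ in $\{0,1\}^D$, the following are equivalent: (1) $\mu_{\mathrm{id}}$ is stable with respect to $\succ_W(\bar x)$ and $\succ_M(\bar y)$; (2) $\mathrm{DISJ}(\bar x,\bar y)=1$.
   Context: $\mathcal F(W,M)$ is the set of profiles assigning each woman a total order on $M$; $\mathcal F(M,W)$ analogously for men. A pair $(w,m)$ is blocking for a perfect marriage $\mu$ if $w$ prefers $m$ to her spouse in $\mu$ and $m$ prefers $w$ to his spouse in $\mu$; $\mu$ is stable if it has no blocking pair. $\mathrm{DISJ}(\bar x,\bar y)=1$ if there is no index $(i,j)$ with $x^i_j=y^i_j=1$, and $0$ otherwise. *)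

(* Defs.v *)
From mathcomp Require Import all_boot all_fingroup.
Set Implicit Arguments. Unset Strict Implicit. Unset Printing Implicit Defensive.

(* Agents: women w_1..w_n are 'I_n (woman i), men m_1..m_n are 'I_n (man j);
   the two sets are kept disjoint by being separate roles. *)

(* A total (strict) order on a finite set of n agents, represented by a
   permutation listing the agents from most to least preferred:
   o k = the agent ranked at position k (0 = best). *)
Definition order_on (n : nat) := {perm 'I_n}.

Definition prefers n (o : order_on n) (x y : 'I_n) : bool :=
  (o^-1)%g x < (o^-1)%g y.

(* F(W,M): each woman gets a total order on M; F(M,W) analogously. *)
Definition profile n := {ffun 'I_n -> order_on n}.

(* A perfect marriage: bijection from women to men; mu w = husband of w. *)
Definition marriage n := {perm 'I_n}.
Definition mu_id n : marriage n := 1%g.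

Definition blocking n (PW PM : profile n) (mu : marriage n) (w m : 'I_n) : bool :=
  prefers (PW w) m (mu w) && prefers (PM m) w ((mu^-1)%g m).

Definition stable n (PW PM : profile n) (mu : marriage n) : bool :=
  [forall w, forall m, ~~ blocking PW PM mu w m].

Definition D n := {ij : 'I_n * 'I_n | ij.1 != ij.2}.
Definition bitvec n := {ffun D n -> bool}.

Definition DISJ n (x y : bitvec n) : bool := [forall d, ~~ (x d && y d)].

(* Main.v *)
Require Import Defs.
From mathcomp Require Import all_boot all_fingroup.
From mathcomp Require Import zify.
Set Implicit Arguments. Unset Strict Implicit.

Section Aux.
Variable n : nat.
Variable k : 'I_n -> nat.

Definition key (a : 'I_n) := k a * n + a.

Lemma key_inj : injective key.
Proof.
move=> a b /(congr1 (modn^~ n)); rewrite /key !modnMDl !modn_small //.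
by move=> h; apply: val_inj.
Qed.

Definition rk (a : 'I_n) : nat := #|[pred b | key b < key a]|.

Lemma rk_lt a : rk a < n.
Proof.
have := cardC [pred b | key b < key a]; rewrite card_ord /rk => E.
apply: (@leq_trans (#|[pred b | key b < key a]| + 1)); last first.
  rewrite -[X in _ <= X]E leq_add2l.
  by apply/card_gt0P; exists a; rewrite !inE ltnn.
by rewrite addn1.
Qed.

Lemma rk_mono a b : (rk a < rk b) = (key a < key b).
Proof.
case: (ltnP (key a) (key b)) => h.
  apply: proper_card; apply/properP; split.
    by apply/subsetP => c; rewrite !inE => /ltn_trans; apply.
  by exists a; rewrite !inE ?ltnn.
apply/negbTE; rewrite -leqNgt; apply: subset_leq_card.
by apply/subsetP => c; rewrite !inE => /leq_trans; apply.
Qed.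

Definition rko a : 'I_n := Ordinal (rk_lt a).

Lemma rko_inj : injective rko.
Proof.
move=> a b [] e.
apply: key_inj.
case: (ltngtP (key a) (key b)) => // h.
  by move: h; rewrite -rk_mono e ltnn.
by move: h; rewrite -rk_mono e ltnn.
Qed.

Definition perm_k : {perm 'I_n} := ((perm rko_inj)^-1)%g.

Lemma prefers_k a b : prefers perm_k a b = (key a < key b).
Proof. rewrite /prefers /perm_k invgK !permE. exact: rk_mono. Qed.
End Aux.

Definition bitx n (x : bitvec n) (w m : 'I_n) : bool :=
  match insub (w, m) : option (D n) with Some d => x d | None => false end.

Definition kw n (x : bitvec n) (w : 'I_n) (m : 'I_n) : nat :=
  if m == w then 1 else if bitx x w m then 0 else 2.
Definition km n (y : bitvec n) (m : 'I_n) (w : 'I_n) : nat :=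
  if w == m then 1 else if bitx y w m then 0 else 2.

Lemma key_cmp n (f : 'I_n -> nat) a b : f b = 1 -> a != b -> (f a == 0) || (f a == 2) ->
  (key f a < key f b) = (f a == 0).
Proof.
rewrite /key => hb hab ha; rewrite hb.
have := ltn_ord a; have := ltn_ord b.
case: (f a) ha => [|[|[|]]] //= _.
  by rewrite mul0n mul1n eqxx => _ ha'; rewrite ltn_addr.
move=> hb' _; apply/negbTE; rewrite -leqNgt mul1n mul2n -addnn -addnA leq_add2l.
exact: leq_trans (ltnW hb') (leq_addr _ _).
Qed.

Lemma blocking_id n (x y : bitvec n) w m :
  blocking [ffun w => perm_k (kw x w)] [ffun m => perm_k (km y m)] (mu_id n) w m
  = (w != m) && bitx x w m && bitx y w m.
Proof.
rewrite /blocking /mu_id invg1 !perm1 !ffunE !prefers_k.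
case: (eqVneq w m) => [->|hwm]; first by rewrite ltnn.
have hmw : m != w by rewrite eq_sym.
rewrite (key_cmp (f := kw x w)) ?(key_cmp (f := km y m)) /kw /km
  ?eqxx ?(negbTE hwm) ?(negbTE hmw) //=; by do ?case: bitx.
Qed.

Theorem lemma14 (n : nat) :
  exists (SW : bitvec n -> profile n) (SM : bitvec n -> profile n),
    forall x y : bitvec n,
      stable (SW x) (SM y) (mu_id n) <-> DISJ x y.
Proof.
exists (fun x => [ffun w => perm_k (kw x w)]), (fun y => [ffun m => perm_k (km y m)]).
move=> x y; rewrite /stable /DISJ; split.
  move/forallP=> H; apply/forallP => -[[w m] h].
  move/forallP: (H w) => /(_ m); rewrite blocking_id /bitx insubT /=.
  by rewrite h.
move/forallP=> H; apply/forallP => w; apply/forallP => m.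
rewrite blocking_id /bitx; case: insubP => [d _ _|]; last by rewrite andbF.
by move: (H d); case: (x d); case: (y d); rewrite ?andbF.
Qed.
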